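(* For all integers $n,r,\lambda\ge1$, $l\ge0$, and every $\mathbf{p}=(p_1,p_2,p_3,p_4)$ with $p_i\in(0,1)$, $\sum_ip_i=1$, write $a=\lfloor p_1n\rfloor$, $u=\lfloor p_2n\rfloor$, $c=\lfloor p_3n\rfloor$, $g=n-a-u-c$, and let \[ \bar l_0=\min\big(\min(a,u)+g,\ \min(c,g)+u\big). \] Then $\bar{s}_{\mathbf{p},\lambda}^{[r]}(n,l)= s_\lambda^{[r]}(n,l)$ if $l\le\bar l_0$ and $\bar{s}_{\mathbf{p},\lambda}^{[r]}(n,l)=0$ otherwise; consequently $\bar{s}_{\mathbf{p},\lambda}^{[r]}(n)= \sum_{l=0}^{\bar l_0} s_\lambda^{[r]}(n,l)$.
   Context: A diagram on $n$ vertices is a graph on $\{1,\dots,n\}$ whose edges (arcs) are pairs $(i,j)$, $i<j$, of length $j-i$. For $\lambda\ge1$, an RNA secondary structure of length $n$ with minimum arc-length $\lambda$ is a diagram with every arc of length $\ge\lambda$, no two arcs sharing an endpoint, and no two arcs $(i_1,j_1),(i_2,j_2)$ with $i_1<i_2<j_1<j_2$. A stack of length $t$ is a maximal sequence of arcs $((i,j),(i+1,j-1),\ldots,(i+t-1,j-t+1))$; the structure is $r$-canonical if all stacks have length $\ge r$. $s_{\lambda}^{[r]}(n,l)$ counts such structures of length $n$ with $l$ arcs. Sequences are over $\{\mathbf{A},\mathbf{U},\mathbf{C},\mathbf{G}\}$ with allowed base pairs $\{\mathbf A,\mathbf U\}$, $\{\mathbf C,\mathbf G\}$ (Watson–Crick)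 and $\{\mathbf U,\mathbf G\}$ (wobble), each in either order; a sequence $x_1\cdots x_n$ is compatible with $S$ if $(x_i,x_j)$ is allowed for every arc $(i,j)$. $\bar{s}_{\mathbf{p},\lambda}^{[r]}(n,l)$ (resp. $\bar{s}_{\mathbf{p},\lambda}^{[r]}(n)$) is the number of $r$-canonical secondary structures of length $n$ with minimum arc-length $\lambda$ having $l$ arcs (resp. any number of arcs) that admit a compatible sequence with exactly $a$ letters $\mathbf A$, $u$ letters $\mathbf U$, $c$ letters $\mathbf C$ and $g$ letters $\mathbf G$. *)

(* Defs.v *)
From HB Require Import structures.
From mathcomp Require Import all_boot all_order all_algebra.
Set Implicit Arguments. Unset Strict Implicit. Unset Printing Implicit Defensive.
Import Order.TTheory GRing.Theory Num.Theory.

Inductive nuc := nA | nU | nC | nG.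

Definition nuc_to (x : nuc) : 'I_4 :=
  match x with nA => inord 0 | nU => inord 1 | nC => inord 2 | nG => inord 3 end.
Definition nuc_of (i : 'I_4) : option nuc :=
  match val i with 0 => Some nA | 1 => Some nU | 2 => Some nC | 3 => Some nG | _ => None end.
Lemma nuc_toK : pcancel nuc_to nuc_of.
Proof. by case; rewrite /nuc_of /= inordK. Qed.
HB.instance Definition _ := Finite.copy nuc (pcan_type nuc_toK).

Definition allowed_pair (x y : nuc) : bool :=
  match x, y with
  | nA, nU | nU, nA | nC, nG | nG, nC | nU, nG | nG, nU => true
  | _, _ => false
  end.

(* Diagrams on n vertices: vertices are 'I_n (vertex k+1 of the paper is k : 'I_n);
   an arc is a pair (i, j), of length j - i. *)
Definition diagram n := {set ('I_n * 'I_n)}.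

Definition is_arc n (S : diagram n) (i j : nat) : bool :=
  [exists e in S, (val e.1 == i) && (val e.2 == j)].

Definition sec_struct n (lam : nat) (S : diagram n) : bool :=
  [&& [forall e in S, (e.1 < e.2)%N && (lam <= e.2 - e.1)%N],
      [forall e in S, forall f in S, (e != f) ==>
          [&& e.1 != f.1, e.1 != f.2, e.2 != f.1 & e.2 != f.2]] &
      [forall e in S, forall f in S,
          ~~ [&& (e.1 < f.1)%N, (f.1 < e.2)%N & (e.2 < f.2)%N]]].

Definition is_stack n (S : diagram n) (i j t : nat) : bool :=
  [&& (0 < t)%N,
      [forall k : 'I_t, is_arc S (i + k) (j - k)],
      ~~ ((0 < i)%N && is_arc S i.-1 j.+1) &
      ~~ is_arc S (i + t) (j - t)].

Definition r_canonical n (r : nat) (S : diagram n) : Prop :=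
  forall i j t, is_stack S i j t -> (r <= t)%N.

Definition r_canonicalb n (r : nat) (S : diagram n) : bool :=
  [forall i : 'I_n, forall j : 'I_n, forall t : 'I_n.+1,
     is_stack S i j t ==> (r <= t)%N].

Lemma r_canonicalP n r (S : diagram n) : reflect (r_canonical r S) (r_canonicalb r S).
Proof.
apply: (iffP idP) => [H i j t st | H].
- have hi : (i < n)%N.
    move: st => /and4P [t0 /forallP /(_ (Ordinal t0)) /existsP [e /andP [_ /andP [/eqP e1 _]]]] _ _.
    by rewrite /= addn0 in e1; rewrite -e1.
  have hj : (j < n)%N.
    move: st => /and4P [t0 /forallP /(_ (Ordinal t0)) /existsP [e /andP [_ /andP [_ /eqP e2]]]] _ _.
    by rewrite /= subn0 in e2; rewrite -e2.
  have ht : (t < n.+1)%N.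
    move: st => /and4P [t0 /forallP Hk _ _].
    have tp : (t.-1 < t)%N by rewrite prednK.
    move: (Hk (Ordinal tp)) => /existsP [e /andP [_ /andP [/eqP e1 _]]].
    rewrite /= in e1; rewrite ltnS -(prednK t0).
    by apply: leq_trans _ (ltn_ord e.1); rewrite ltnS e1 leq_addl.
  move/forallP: H => /(_ (Ordinal hi)) /forallP /(_ (Ordinal hj)) /forallP /(_ (Ordinal ht)).
  by move/implyP; apply.
- by apply/forallP => i; apply/forallP => j; apply/forallP => t; apply/implyP; apply: H.
Qed.

Definition rna_struct n (lam r : nat) (S : diagram n) : bool :=
  sec_struct lam S && r_canonicalb r S.

Definition compatible n (S : diagram n) (x : {ffun 'I_n -> nuc}) : bool :=
  [forall e in S, allowed_pair (x e.1) (x e.2)].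

Definition count_letter n (x : {ffun 'I_n -> nuc}) (b : nuc) : nat :=
  #|[set i : 'I_n | x i == b]|.

Definition admits_comp n (S : diagram n) (a u c g : nat) : bool :=
  [exists x : {ffun 'I_n -> nuc},
     [&& compatible S x, count_letter x nA == a, count_letter x nU == u,
         count_letter x nC == c & count_letter x nG == g]].

Definition s_count (lam r n l : nat) : nat :=
  #|[set S : diagram n | rna_struct lam r S && (#|S| == l)]|.

Definition sbar_count (lam r n l a u c g : nat) : nat :=
  #|[set S : diagram n | [&& rna_struct lam r S, #|S| == l & admits_comp S a u c g]]|.

Definition sbar_count_all (lam r n a u c g : nat) : nat :=
  #|[set S : diagram n | rna_struct lam r S && admits_comp S a u c g]|.

(* Main.v *)
Require Import Defs.
From HB Require Import structures.
From mathcomp Require Import all_boot all_order all_algebra zify.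
Import Order.TTheory GRing.Theory Num.Theory.
Set Implicit Arguments. Unset Strict Implicit. Unset Printing Implicit Defensive.

Lemma subset_size (T : finType) (A : {set T}) k :
  k <= #|A| -> exists2 B : {set T}, B \subset A & #|B| = k.
Proof.
elim: k => [|k IH] hk; first by exists set0; rewrite ?sub0set ?cards0.
have [B BA cB] := IH (ltnW hk).
have /properP [_ [x xA xB]] : B \proper A by rewrite properEcard BA cB hk.
exists (x |: B); first by rewrite subUset sub1set xA BA.
by rewrite cardsU1 xB cB.
Qed.

Lemma cardsU_disj (T : finType) (A B : {set T}) :
  (forall i, i \in A -> i \notin B) -> #|A :|: B| = #|A| + #|B|.
Proof.
move=> H; rewrite cardsU.
suff -> : #|A :&: B| = 0 by rewrite subn0.
apply/eqP; rewrite cards_eq0; apply/eqP/setP => i; rewrite !inE.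
by case: (boolP (i \in A)) => //= /H /negbTE ->.
Qed.

Lemma cardsD_sub (T : finType) (A B : {set T}) :
  B \subset A -> #|A :\: B| = #|A| - #|B|.
Proof. by move=> h; rewrite cardsD (setIidPr h). Qed.

Section Arcs.
Variables (n : nat) (S : diagram n).
Hypothesis Hlt : forall e, e \in S -> (e.1 < e.2)%N.
Hypothesis Hdis : forall e f, e \in S -> f \in S -> e != f ->
  [&& e.1 != f.1, e.1 != f.2, e.2 != f.1 & e.2 != f.2].

Lemma inj11 e f : e \in S -> f \in S -> e.1 = f.1 -> e = f.
Proof.
move=> eS fS h; case: (eqVneq e f) => // ne.
by case/and4P: (Hdis eS fS ne); rewrite h eqxx.
Qed.

Lemma inj22 e f : e \in S -> f \in S -> e.2 = f.2 -> e = f.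
Proof.
move=> eS fS h; case: (eqVneq e f) => // ne.
by case/and4P: (Hdis eS fS ne); rewrite h eqxx.
Qed.

Lemma ne12 e f : e \in S -> f \in S -> e.1 <> f.2.
Proof.
move=> eS fS h; case: (eqVneq e f) => [ef|ne].
  by subst f; move: (Hlt eS); rewrite h ltnn.
by case/and4P: (Hdis eS fS ne); rewrite h eqxx.
Qed.

Lemma ne12' e : e \in S -> e.1 != e.2.
Proof. by move=> eS; rewrite -val_eqE neq_ltn Hlt. Qed.

Definition LL (S' : diagram n) := [set f.1 | f in S'].
Definition RR (S' : diagram n) := [set f.2 | f in S'].
Definition EE := LL S :|: RR S.

Lemma memL e (S' : diagram n) : S' \subset S -> e \in S -> (e.1 \in LL S') = (e \in S').
Proof.
move=> sub eS; apply/imsetP/idP => [[f fS' h]|eS']; last by exists e.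
by rewrite (inj11 eS (subsetP sub _ fS') h).
Qed.

Lemma memR e (S' : diagram n) : S' \subset S -> e \in S -> (e.2 \in RR S') = (e \in S').
Proof.
move=> sub eS; apply/imsetP/idP => [[f fS' h]|eS']; last by exists e.
by rewrite (inj22 eS (subsetP sub _ fS') h).
Qed.

Lemma memLR e (S' : diagram n) : S' \subset S -> e \in S -> (e.2 \in LL S') = false.
Proof.
move=> sub eS; apply/imsetP => [[f fS' h]].
exact: (ne12 (subsetP sub _ fS') eS (esym h)).
Qed.

Lemma memRL e (S' : diagram n) : S' \subset S -> e \in S -> (e.1 \in RR S') = false.
Proof.
move=> sub eS; apply/imsetP => [[f fS' h]].
exact: (ne12 eS (subsetP sub _ fS') h).
Qed.

Lemma LL_E i (S' : diagram n) : S' \subset S -> i \in LL S' -> i \in EE.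
Proof.
move=> sub /imsetP [f fS ->]; rewrite inE; apply/orP; left.
by apply/imsetP; exists f => //; apply: (subsetP sub).
Qed.

Lemma RR_E i (S' : diagram n) : S' \subset S -> i \in RR S' -> i \in EE.
Proof.
move=> sub /imsetP [f fS ->]; rewrite inE; apply/orP; right.
by apply/imsetP; exists f => //; apply: (subsetP sub).
Qed.

Lemma card_LL (S' : diagram n) : S' \subset S -> #|LL S'| = #|S'|.
Proof.
move=> sub; apply: card_in_imset => e f eS fS.
exact: inj11 (subsetP sub _ eS) (subsetP sub _ fS).
Qed.

Lemma card_RR (S' : diagram n) : S' \subset S -> #|RR S'| = #|S'|.
Proof.
move=> sub; apply: card_in_imset => e f eS fS.
exact: inj22 (subsetP sub _ eS) (subsetP sub _ fS).
Qed.

Lemma card_EE : #|EE| = 2 * #|S|.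
Proof.
rewrite cardsU_disj ?card_LL ?card_RR ?subxx //; first lia.
move=> i /imsetP [e eS ->]; by rewrite memRL.
Qed.

Lemma arc_bound (x : {ffun 'I_n -> nuc}) (Q : pred nuc) :
  (forall e, e \in S -> allowed_pair (x e.1) (x e.2)) ->
  (forall y z, allowed_pair y z -> Q y || Q z) ->
  #|S| <= #|[set i | Q (x i)]|.
Proof.
move=> comp HQ.
pose f (e : 'I_n * 'I_n) := if Q (x e.1) then e.1 else e.2.
have inj : {in S &, injective f}.
  move=> e e' eS eS'; rewrite /f.
  case: ifP => _; case: ifP => _ h.
  - exact: inj11.
  - by case: (ne12 eS eS' h).
  - by case: (ne12 eS' eS (esym h)).
  - exact: inj22.
rewrite -(card_in_imset inj); apply: subset_leq_card.
apply/subsetP => i /imsetP [e eS ->]; rewrite inE /f.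
case: ifP => h; first exact: h.
by have := HQ _ _ (comp e eS); rewrite h.
Qed.

End Arcs.

Section Construct.
Variables (n : nat) (S : diagram n).
Hypothesis Hlt : forall e, e \in S -> (e.1 < e.2)%N.
Hypothesis Hdis : forall e f, e \in S -> f \in S -> e != f ->
  [&& e.1 != f.1, e.1 != f.2, e.2 != f.1 & e.2 != f.2].
Variables (S1 S2 : diagram n) (UA UU UC : {set 'I_n}).
Hypothesis sub1 : S1 \subset S.
Hypothesis sub2 : S2 \subset S :\: S1.
Hypothesis subA : UA \subset ~: EE S.
Hypothesis subU : UU \subset ~: EE S :\: UA.
Hypothesis subC : UC \subset ~: EE S :\: UA :\: UU.

Definition S3 := S :\: S1 :\: S2.
Definition UG := ~: EE S :\: UA :\: UU :\: UC.

Lemma sub2' : S2 \subset S.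
Proof. by apply: subset_trans sub2 _; apply: subsetDl. Qed.
Lemma sub3 : S3 \subset S.
Proof. by rewrite /S3; apply: subset_trans (subsetDl _ _) (subsetDl _ _). Qed.

Definition lft e := if e \in S1 then nA else if e \in S2 then nC else nU.
Definition rgt e := if e \in S1 then nU else nG.
Definition dflt i := if i \in UA then nA else if i \in UU then nU
  else if i \in UC then nC else nG.
Definition xf : {ffun 'I_n -> nuc} :=
  [ffun i => match [pick e in S | (e.1 == i) || (e.2 == i)] with
             | Some e => if e.1 == i then lft e else rgt e
             | None => dflt i end].

Lemma xf1 e : e \in S -> xf e.1 = lft e.
Proof.
move=> eS; rewrite ffunE; case: pickP => [f /andP[fS /orP[/eqP h|/eqP h]]|none].
- by rewrite (inj11 Hdis fS eS h) eqxx.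
- by case: (ne12 Hlt Hdis eS fS (esym h)).
- by move: (none e); rewrite eS eqxx.
Qed.

Lemma xf2 e : e \in S -> xf e.2 = rgt e.
Proof.
move=> eS; rewrite ffunE; case: pickP => [f /andP[fS /orP[/eqP h|/eqP h]]|none].
- by case: (ne12 Hlt Hdis fS eS h).
- by rewrite (inj22 Hdis fS eS h) (negbTE (ne12' Hlt eS)).
- by move: (none e); rewrite eS eqxx orbT.
Qed.

Lemma xfU i : i \notin EE S -> xf i = dflt i.
Proof.
move=> iE; rewrite ffunE; case: pickP => [f /andP[fS /orP[/eqP h|/eqP h]]|//].
- by move: iE; rewrite -h inE; case/norP => /imsetP []; exists f.
- by move: iE; rewrite -h inE; case/norP => _ /imsetP []; exists f.
Qed.

Lemma classify e : e \in S ->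
  [/\ e \in S1, e \notin S2 & e \notin S3] \/
  [/\ e \notin S1, e \in S2 & e \notin S3] \/
  [/\ e \notin S1, e \notin S2 & e \in S3].
Proof.
move=> eS; rewrite /S3 !inE eS /=.
case: (boolP (e \in S1)) => h1; case: (boolP (e \in S2)) => h2 /=.
- by move: (subsetP sub2 _ h2); rewrite inE h1.
- by left.
- by right; left.
- by right; right.
Qed.

Lemma notE_mem i : i \in EE S ->
  [/\ i \notin UA, i \notin UU, i \notin UC & i \notin UG].
Proof.
move=> iE; split.
- by apply/negP => /(subsetP subA); rewrite in_setC iE.
- by apply/negP => /(subsetP subU); rewrite !in_setD in_setC iE andbF.
- by apply/negP => /(subsetP subC); rewrite !in_setD in_setC iE !andbF.
- by rewrite /UG !in_setD in_setC iE !andbF.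
Qed.

Lemma U_disj i : [/\ i \in UU -> i \notin UA, i \in UC -> i \notin UA &
   i \in UC -> i \notin UU].
Proof.
split => h.
- by move: (subsetP subU _ h); rewrite inE; case/andP.
- by move: (subsetP subC _ h); rewrite !inE; case/and3P.
- by move: (subsetP subC _ h); rewrite !inE; case/and3P.
Qed.

Lemma setA_eq : [set i | xf i == nA] = LL S1 :|: UA.
Proof.
apply/setP => i; rewrite in_set !in_setU.
case: (boolP (i \in EE S)) => iE.
  case: (notE_mem iE) => nA' nU' nC' nG'.
  rewrite ?(negbTE nA') ?(negbTE nU') ?(negbTE nC') ?(negbTE nG') ?orbF.
  move: iE; rewrite inE => /orP[/imsetP[e eS ->]|/imsetP[e eS ->]];
  rewrite ?xf1 ?xf2 //
      ?(memL Hdis sub1) ?(memL Hdis sub2') ?(memL Hdis sub3)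
      ?(memR Hdis sub1) ?(memR Hdis sub2') ?(memR Hdis sub3)
      ?(memLR Hlt Hdis sub1) ?(memLR Hlt Hdis sub2') ?(memLR Hlt Hdis sub3)
      ?(memRL Hlt Hdis sub1) ?(memRL Hlt Hdis sub2') ?(memRL Hlt Hdis sub3) //;
  rewrite /lft /rgt;
  case: (classify eS) => [[h1 h2 h3]|[[h1 h2 h3]|[h1 h2 h3]]];
  rewrite ?h1 ?h2 ?h3 ?(negbTE h1) ?(negbTE h2) ?(negbTE h3) //.
  all: try solve [ rewrite eqxx // | apply/negbTE/eqP; discriminate ].
rewrite xfU //.
have nL : forall S' : diagram n, S' \subset S -> (i \in LL S') = false.
  by move=> S' sS; apply/negP => /(LL_E sS); rewrite (negbTE iE).
have nR : forall S' : diagram n, S' \subset S -> (i \in RR S') = false.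
  by move=> S' sS; apply/negP => /(RR_E sS); rewrite (negbTE iE).
rewrite ?(nL _ sub1) ?(nL _ sub2') ?(nL _ sub3) ?(nR _ sub1) ?(nR _ sub2')
  ?(nR _ sub3) /= /dflt /UG ?in_setD ?in_setC ?iE /=.
case: (U_disj i) => d1 d2 d3.
case: (boolP (i \in UA)) => a1; case: (boolP (i \in UU)) => a2;
case: (boolP (i \in UC)) => a3 //=.
all: try solve [ rewrite eqxx // | apply/negbTE/eqP; discriminate ].
all: try by move: (d1 a2); rewrite a1.
all: try by move: (d2 a3); rewrite a1.
all: try by move: (d3 a3); rewrite a2.
Qed.

Lemma setU_eq : [set i | xf i == nU] = RR S1 :|: LL S3 :|: UU.
Proof.
apply/setP => i; rewrite in_set !in_setU.
case: (boolP (i \in EE S)) => iE.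
  case: (notE_mem iE) => nA' nU' nC' nG'.
  rewrite ?(negbTE nA') ?(negbTE nU') ?(negbTE nC') ?(negbTE nG') ?orbF.
  move: iE; rewrite inE => /orP[/imsetP[e eS ->]|/imsetP[e eS ->]];
  rewrite ?xf1 ?xf2 //
      ?(memL Hdis sub1) ?(memL Hdis sub2') ?(memL Hdis sub3)
      ?(memR Hdis sub1) ?(memR Hdis sub2') ?(memR Hdis sub3)
      ?(memLR Hlt Hdis sub1) ?(memLR Hlt Hdis sub2') ?(memLR Hlt Hdis sub3)
      ?(memRL Hlt Hdis sub1) ?(memRL Hlt Hdis sub2') ?(memRL Hlt Hdis sub3) //;
  rewrite /lft /rgt;
  case: (classify eS) => [[h1 h2 h3]|[[h1 h2 h3]|[h1 h2 h3]]];
  rewrite ?h1 ?h2 ?h3 ?(negbTE h1) ?(negbTE h2) ?(negbTE h3) //.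
  all: try solve [ rewrite eqxx // | apply/negbTE/eqP; discriminate ].
rewrite xfU //.
have nL : forall S' : diagram n, S' \subset S -> (i \in LL S') = false.
  by move=> S' sS; apply/negP => /(LL_E sS); rewrite (negbTE iE).
have nR : forall S' : diagram n, S' \subset S -> (i \in RR S') = false.
  by move=> S' sS; apply/negP => /(RR_E sS); rewrite (negbTE iE).
rewrite ?(nL _ sub1) ?(nL _ sub2') ?(nL _ sub3) ?(nR _ sub1) ?(nR _ sub2')
  ?(nR _ sub3) /= /dflt /UG ?in_setD ?in_setC ?iE /=.
case: (U_disj i) => d1 d2 d3.
case: (boolP (i \in UA)) => a1; case: (boolP (i \in UU)) => a2;
case: (boolP (i \in UC)) => a3 //=.
all: try solve [ rewrite eqxx // | apply/negbTE/eqP; discriminate ].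
all: try by move: (d1 a2); rewrite a1.
all: try by move: (d2 a3); rewrite a1.
all: try by move: (d3 a3); rewrite a2.
Qed.

Lemma setC_eq : [set i | xf i == nC] = LL S2 :|: UC.
Proof.
apply/setP => i; rewrite in_set !in_setU.
case: (boolP (i \in EE S)) => iE.
  case: (notE_mem iE) => nA' nU' nC' nG'.
  rewrite ?(negbTE nA') ?(negbTE nU') ?(negbTE nC') ?(negbTE nG') ?orbF.
  move: iE; rewrite inE => /orP[/imsetP[e eS ->]|/imsetP[e eS ->]];
  rewrite ?xf1 ?xf2 //
      ?(memL Hdis sub1) ?(memL Hdis sub2') ?(memL Hdis sub3)
      ?(memR Hdis sub1) ?(memR Hdis sub2') ?(memR Hdis sub3)
      ?(memLR Hlt Hdis sub1) ?(memLR Hlt Hdis sub2') ?(memLR Hlt Hdis sub3)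
      ?(memRL Hlt Hdis sub1) ?(memRL Hlt Hdis sub2') ?(memRL Hlt Hdis sub3) //;
  rewrite /lft /rgt;
  case: (classify eS) => [[h1 h2 h3]|[[h1 h2 h3]|[h1 h2 h3]]];
  rewrite ?h1 ?h2 ?h3 ?(negbTE h1) ?(negbTE h2) ?(negbTE h3) //.
  all: try solve [ rewrite eqxx // | apply/negbTE/eqP; discriminate ].
rewrite xfU //.
have nL : forall S' : diagram n, S' \subset S -> (i \in LL S') = false.
  by move=> S' sS; apply/negP => /(LL_E sS); rewrite (negbTE iE).
have nR : forall S' : diagram n, S' \subset S -> (i \in RR S') = false.
  by move=> S' sS; apply/negP => /(RR_E sS); rewrite (negbTE iE).
rewrite ?(nL _ sub1) ?(nL _ sub2') ?(nL _ sub3) ?(nR _ sub1) ?(nR _ sub2')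
  ?(nR _ sub3) /= /dflt /UG ?in_setD ?in_setC ?iE /=.
case: (U_disj i) => d1 d2 d3.
case: (boolP (i \in UA)) => a1; case: (boolP (i \in UU)) => a2;
case: (boolP (i \in UC)) => a3 //=.
all: try solve [ rewrite eqxx // | apply/negbTE/eqP; discriminate ].
all: try by move: (d1 a2); rewrite a1.
all: try by move: (d2 a3); rewrite a1.
all: try by move: (d3 a3); rewrite a2.
Qed.

Lemma setG_eq : [set i | xf i == nG] = RR S2 :|: RR S3 :|: UG.
Proof.
apply/setP => i; rewrite in_set !in_setU.
case: (boolP (i \in EE S)) => iE.
  case: (notE_mem iE) => nA' nU' nC' nG'.
  rewrite ?(negbTE nA') ?(negbTE nU') ?(negbTE nC') ?(negbTE nG') ?orbF.
  move: iE; rewrite inE => /orP[/imsetP[e eS ->]|/imsetP[e eS ->]];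
  rewrite ?xf1 ?xf2 //
      ?(memL Hdis sub1) ?(memL Hdis sub2') ?(memL Hdis sub3)
      ?(memR Hdis sub1) ?(memR Hdis sub2') ?(memR Hdis sub3)
      ?(memLR Hlt Hdis sub1) ?(memLR Hlt Hdis sub2') ?(memLR Hlt Hdis sub3)
      ?(memRL Hlt Hdis sub1) ?(memRL Hlt Hdis sub2') ?(memRL Hlt Hdis sub3) //;
  rewrite /lft /rgt;
  case: (classify eS) => [[h1 h2 h3]|[[h1 h2 h3]|[h1 h2 h3]]];
  rewrite ?h1 ?h2 ?h3 ?(negbTE h1) ?(negbTE h2) ?(negbTE h3) //.
  all: try solve [ rewrite eqxx // | apply/negbTE/eqP; discriminate ].
rewrite xfU //.
have nL : forall S' : diagram n, S' \subset S -> (i \in LL S') = false.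
  by move=> S' sS; apply/negP => /(LL_E sS); rewrite (negbTE iE).
have nR : forall S' : diagram n, S' \subset S -> (i \in RR S') = false.
  by move=> S' sS; apply/negP => /(RR_E sS); rewrite (negbTE iE).
rewrite ?(nL _ sub1) ?(nL _ sub2') ?(nL _ sub3) ?(nR _ sub1) ?(nR _ sub2')
  ?(nR _ sub3) /= /dflt /UG ?in_setD ?in_setC ?iE /=.
case: (U_disj i) => d1 d2 d3.
case: (boolP (i \in UA)) => a1; case: (boolP (i \in UU)) => a2;
case: (boolP (i \in UC)) => a3 //=.
all: try solve [ rewrite eqxx // | apply/negbTE/eqP; discriminate ].
all: try by move: (d1 a2); rewrite a1.
all: try by move: (d2 a3); rewrite a1.
all: try by move: (d3 a3); rewrite a2.
Qed.


Lemma xf_comp : compatible S xf.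
Proof.
apply/forall_inP => e eS; rewrite xf1 // xf2 // /lft /rgt.
by case: (classify eS) => [[h1 h2 h3]|[[h1 h2 h3]|[h1 h2 h3]]];
  rewrite ?h1 ?h2 ?(negbTE h1) ?(negbTE h2).
Qed.

Lemma card_cE : #|~: EE S| = n - 2 * #|S|.
Proof. have := cardsC (EE S); rewrite card_ord card_EE //; lia. Qed.

Lemma card_S3 : #|S3| = #|S| - #|S1| - #|S2|.
Proof. by rewrite /S3 cardsD_sub // cardsD_sub. Qed.

Lemma card_UG : #|UG| = #|~: EE S| - #|UA| - #|UU| - #|UC|.
Proof. by rewrite /UG !cardsD_sub. Qed.

Lemma cntA : count_letter xf nA = #|S1| + #|UA|.
Proof.
rewrite /count_letter setA_eq cardsU_disj ?(card_LL Hdis sub1) //.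
by move=> i /(LL_E sub1) /notE_mem [].
Qed.

Lemma cntC : count_letter xf nC = #|S2| + #|UC|.
Proof.
rewrite /count_letter setC_eq cardsU_disj ?(card_LL Hdis sub2') //.
by move=> i /(LL_E sub2') /notE_mem [].
Qed.

Lemma cntU : count_letter xf nU = #|S1| + #|S3| + #|UU|.
Proof.
rewrite /count_letter setU_eq cardsU_disj ?cardsU_disj ?(card_LL Hdis sub3) ?(card_RR Hdis sub1) //.
- move=> i /imsetP [e eS ->]; rewrite (memLR Hlt Hdis sub3) //.
  exact: (subsetP sub1).
- move=> i; rewrite in_setU => /orP [/(RR_E sub1)|/(LL_E sub3)] /notE_mem [] //.
Qed.

Lemma cntG : count_letter xf nG = #|S2| + #|S3| + #|UG|.
Proof.
rewrite /count_letter setG_eq cardsU_disj ?cardsU_disj ?(card_RR Hdis sub3) ?(card_RR Hdis sub2') //.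
- move=> i /imsetP [e eS ->]; rewrite (memR Hdis sub3) ?(subsetP sub2') //.
  by rewrite /S3 !inE eS.
- move=> i; rewrite in_setU => /orP [/(RR_E sub2')|/(RR_E sub3)] /notE_mem [] //.
Qed.

End Construct.

Lemma sec_props n lam (S : diagram n) : sec_struct lam S ->
  (forall e, e \in S -> (e.1 < e.2)%N) /\
  (forall e f, e \in S -> f \in S -> e != f ->
    [&& e.1 != f.1, e.1 != f.2, e.2 != f.1 & e.2 != f.2]).
Proof.
case/and3P => /forall_inP H1 /forall_inP H2 _; split.
- by move=> e /H1 /andP [].
- by move=> e f eS fS ne; move/forall_inP: (H2 e eS) => /(_ f fS) /implyP; apply.
Qed.

Lemma cnt2 n (x : {ffun 'I_n -> nuc}) b1 b2 : b1 != b2 ->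
  #|[set i | (fun y => (y == b1) || (y == b2)) (x i)]| = count_letter x b1 + count_letter x b2.
Proof.
move=> ne; rewrite /count_letter -cardsU_disj.
  by apply: eq_card => i; rewrite !inE.
move=> i; rewrite !inE => /eqP ->; exact: ne.
Qed.

Lemma admitsE n lam (S : diagram n) a u c g : sec_struct lam S -> a + u + c + g = n ->
  admits_comp S a u c g = (#|S| <= minn (minn a u + g) (minn c g + u)).
Proof.
move=> /sec_props [Hlt Hdis] hsum; apply/idP/idP.
  case/existsP => x /and5P [/forall_inP comp /eqP ca /eqP cu /eqP cc /eqP cg].
  have h1 := arc_bound Hlt Hdis (Q := fun y => (y == nA) || (y == nG)) comp
    ltac:(move=> y z; case: y; case: z => // _ /=; rewrite ?eqxx ?orbT //).
  have h2 := arc_bound Hlt Hdis (Q := fun y => (y == nU) || (y == nG)) comp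
    ltac:(move=> y z; case: y; case: z => // _ /=; rewrite ?eqxx ?orbT //).
  have h3 := arc_bound Hlt Hdis (Q := fun y => (y == nC) || (y == nU)) comp
    ltac:(move=> y z; case: y; case: z => // _ /=; rewrite ?eqxx ?orbT //).
  rewrite cnt2 in h1; last by apply/eqP.
  rewrite cnt2 in h2; last by apply/eqP.
  rewrite cnt2 in h3; last by apply/eqP.
  rewrite ca cg in h1; rewrite cu cg in h2; rewrite cc cu in h3; lia.
move=> hl.
set l := #|S| in hl.
have [x0 [y0 [z0 [f1 [f2 [f3 [f4 f5]]]]]]] : exists x0 y0 z0, [/\ x0 + y0 + z0 = l,
   x0 <= a, y0 <= c, x0 + z0 <= u & y0 + z0 <= g].
  exists (minn l (minn a u)), (minn (l - minn l (minn a u)) c),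
    (l - minn l (minn a u) - minn (l - minn l (minn a u)) c).
  split; lia.
clear hl.
have hE : #|~: EE S| = n - 2 * l.
  by have := cardsC (EE S); rewrite card_ord (card_EE Hlt Hdis); lia.
have [S1 s1 c1] := @subset_size _ S x0 ltac:(rewrite -/l; lia).
have [S2 s2 c2] := @subset_size _ (S :\: S1) y0
  ltac:(rewrite cardsD_sub // c1 -/l; lia).
have [UA sA cA] := @subset_size _ (~: EE S) (a - x0)
  ltac:(rewrite hE; lia).
have [UU sU cU] := @subset_size _ (~: EE S :\: UA) (u - x0 - z0)
  ltac:(rewrite cardsD_sub // hE cA; lia).
have [UC sC cC] := @subset_size _ (~: EE S :\: UA :\: UU) (c - y0)
  ltac:(rewrite cardsD_sub // cardsD_sub // hE cA cU; lia).
apply/existsP; exists (xf S S1 S2 UA UU UC).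
rewrite (xf_comp Hlt Hdis) // (cntA Hlt Hdis) // (cntU Hlt Hdis) //
  (cntC Hlt Hdis) // (cntG Hlt Hdis) // card_S3 // card_UG // hE.
rewrite c1 c2 cA cU cC -/l.
apply/and4P; split; apply/eqP; lia.
Qed.

Lemma sum_le (T : finType) (P : pred {set T}) m :
  #|[set S | P S && (#|S| <= m)]| = (\sum_(0 <= l < m.+1) #|[set S | P S && (#|S| == l)]|)%N.
Proof.
elim: m => [|m IH].
  rewrite big_nat1; apply: eq_card => S; by rewrite !inE leqn0.
rewrite big_nat_recr //= -IH -cardsU_disj.
  apply: eq_card => S; rewrite !inE leq_eqVlt ltnS.
  by case: (P S) => //=; rewrite orbC.
move=> S; rewrite !inE => /andP [_ h]; apply/negP => /andP [_ /eqP e].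
by move: h; rewrite e ltnn.
Qed.

Theorem mainTheorem7 (R : archiFieldType) (n r lam : nat) (p1 p2 p3 p4 : R) :
  (1 <= n)%N -> (1 <= r)%N -> (1 <= lam)%N ->
  (0 < p1 < 1)%R -> (0 < p2 < 1)%R -> (0 < p3 < 1)%R -> (0 < p4 < 1)%R ->
  (p1 + p2 + p3 + p4 = 1)%R ->
  let a := Num.truncn (p1 * n%:R)%R in
  let u := Num.truncn (p2 * n%:R)%R in
  let c := Num.truncn (p3 * n%:R)%R in
  let g := (n - a - u - c)%N in
  let l0 := minn (minn a u + g) (minn c g + u) in
  (forall l : nat,
     sbar_count lam r n l a u c g = (if (l <= l0)%N then s_count lam r n l else 0%N)) /\
  sbar_count_all lam r n a u c g = (\sum_(0 <= l < l0.+1) s_count lam r n l)%N.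
Proof.
move=> _ _ _ /andP [p10 _] /andP [p20 _] /andP [p30 _] /andP [p40 _] hs a u c g l0.
have hauc : (a + u + c <= n)%N.
  rewrite -(ler_nat R) !natrD.
  have ha : (a%:R <= p1 * n%:R :> R)%R by rewrite truncn_le mulr_ge0 // ltW.
  have hu : (u%:R <= p2 * n%:R :> R)%R by rewrite truncn_le mulr_ge0 // ltW.
  have hc : (c%:R <= p3 * n%:R :> R)%R by rewrite truncn_le mulr_ge0 // ltW.
  have hp : (p1 + p2 + p3 <= 1 :> R)%R.
    by rewrite -hs -[X in (X <= _)%R]addr0 lerD2l ltW.
  have hn : (0 <= n%:R :> R)%R by [].
  have : ((p1 + p2 + p3) * n%:R <= 1 * n%:R :> R)%R by rewrite ler_wpM2r.
  rewrite mul1r !mulrDl => h.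
  by apply: le_trans h; rewrite !lerD.
have hsum : (a + u + c + g = n)%N by rewrite /g; lia.
have key : forall S : diagram n, rna_struct lam r S ->
    admits_comp S a u c g = (#|S| <= l0)%N.
  by move=> S /andP [hS _]; rewrite (admitsE hS hsum).
split.
  move=> l; rewrite /sbar_count /s_count; case: ifP => hl.
    apply: eq_card => S; rewrite !inE.
    case: (boolP (rna_struct lam r S)) => //= hS.
    case: eqP => //= e; by rewrite key // e hl.
  apply/eqP; rewrite cards_eq0; apply/eqP/setP => S; rewrite !inE.
  case: (boolP (rna_struct lam r S)) => //= hS.
  case: eqP => //= e; by rewrite key // e hl.
rewrite /sbar_count_all /s_count -sum_le.
apply: eq_card => S; rewrite !inE.
case: (boolP (rna_struct lam r S)) => //= hS; by rewrite key.
Qed.
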